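(* Let $\tau\in\mathcal{P}^\pm$, $\alpha,\beta\in\mathbb{R}$, and suppose $T_{\mathrm{ng}}=T_{\mathrm{ng}}(\tau;\alpha,\beta)$ is an exceptional Jacobi operator; let $T_{\mathrm{rg}}=T_{\mathrm{rg}}(\tau;\alpha,\beta)$ and $N=\deg\tau$. Every quasi-polynomial eigenfunction of $T_{\mathrm{rg}}$ has the form $\pi_k(x)=P_n(x)/\tau(x)$ with $k\in I_1(T_{\mathrm{rg}})$, $k=n-N$, where $P_n\in\mathcal{P}^\pm$ is an eigenpolynomial of $T_{\mathrm{ng}}$ of degree $n$. Moreover, if $\alpha,\beta\notin\mathbb{Z}_-$, then $I_1(T_{\mathrm{rg}})=I(T_{\mathrm{ng}})-N$ and $\sigma_{\mathcal{P}}(T_{\mathrm{ng}})=\sigma_1(T_{\mathrm{rg}})=\{k(k+\alpha+\beta+1):k\in I_1(T_{\mathrm{rg}})\}$.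
   Context: $D=d/dx$; $\mathcal{P}^\pm$ denotes the set of real polynomials not vanishing at $x=\pm1$; $\mathbb{Z}_-=\{-1,-2,\ldots\}$. $\eta(x;\alpha,\beta)=\frac{\alpha+1}{x-1}+\frac{\beta+1}{x+1}$; $T_{\mathrm{ng}}(\tau;\alpha,\beta)=(x^2-1)\big(D^2-2\frac{\tau'}{\tau}D+\frac{\tau''}{\tau}+\eta(D-\frac{\tau'}{\tau})\big)+2x\frac{\tau'}{\tau}$; $T_{\mathrm{rg}}(\tau;\alpha,\beta)=\tau^{-1}\circ T_{\mathrm{ng}}(\tau;\alpha,\beta)\circ\tau$. An eigenpolynomial of an operator $T$ is a nonzero polynomial $P$ with $TP=\lambda P$ for a constant $\lambda$; $\sigma_{\mathcal{P}}(T)$ is the set of such $\lambda$ and $I(T)$ the set of degrees of eigenpolynomials. $T_{\mathrm{ng}}$ is exceptional if $\mathbb{N}_0\setminus I(T_{\mathrm{ng}})$ is finite. A quasi-polynomial eigenfunction of $T$ is a rational solution $\pi$ of $T\pi=\lambda\pi$ with no zeros or poles at $x=\pm1$; its degree is the degree of the numerator minus that of the denominator; $I_1(T)$ is the set of such degrees and $\sigma_1(T)$ the set of corresponding eigenvalues. *)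

(* Defs.v *)
From HB Require Import structures.
From mathcomp Require Import all_boot all_order all_algebra.
From mathcomp Require Import boolp classical_sets cardinality reals.
Set Implicit Arguments. Unset Strict Implicit. Unset Printing Implicit Defensive.
Import Order.TTheory GRing.Theory Num.Theory.
Local Open Scope ring_scope.
Local Open Scope classical_set_scope.

Section Jacobi.
Variable R : realType.

Definition ratf := {fraction {poly R}}.

Definition polyF (p : {poly R}) : ratf := @FracField.tofrac _ p.
Definition cstF (c : R) : ratf := polyF c%:P.
Definition xF : ratf := polyF 'X.

Definition fderiv (f : ratf) : ratf :=
  let r := repr f in
  polyF ((\n_r)^`() * \d_r - \n_r * (\d_r)^`()) / polyF (\d_r ^+ 2).

Definition fdeg (f : ratf) : int :=
  let r := repr f in (size \n_r)%:Z - (size \d_r)%:Z.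

Definition Ppm (p : {poly R}) : Prop := p.[1] != 0 /\ p.[-1] != 0.

Definition eta (a b : R) : ratf :=
  cstF (a + 1) / (xF - 1) + cstF (b + 1) / (xF + 1).

Definition Tng (tau : {poly R}) (a b : R) (f : ratf) : ratf :=
  let t := polyF tau in
  let t1 := polyF tau^`() in
  let t2 := polyF tau^`(2) in
  (xF ^+ 2 - 1) *
    (fderiv (fderiv f) - 2%:R * (t1 / t) * fderiv f + (t2 / t) * f
     + eta a b * (fderiv f - (t1 / t) * f))
  + 2%:R * xF * (t1 / t) * f.

Definition Trg (tau : {poly R}) (a b : R) (f : ratf) : ratf :=
  (polyF tau)^-1 * Tng tau a b (polyF tau * f).

Definition is_eigpoly (T : ratf -> ratf) (P : {poly R}) (lam : R) : Prop :=
  P != 0 /\ T (polyF P) = cstF lam * polyF P.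

Definition sigmaP (T : ratf -> ratf) : set R :=
  [set lam | exists P, is_eigpoly T P lam].

Definition Ipoly (T : ratf -> ratf) : set nat :=
  [set n | exists P lam, is_eigpoly T P lam /\ (size P).-1 = n].

Definition exceptional (T : ratf -> ratf) : Prop := finite_set (~` Ipoly T).

Definition is_qpeig (T : ratf -> ratf) (pi : ratf) (lam : R) : Prop :=
  (exists p q : {poly R}, Ppm p /\ Ppm q /\ pi = polyF p / polyF q)
  /\ T pi = cstF lam * pi.

Definition I1 (T : ratf -> ratf) : set int :=
  [set k | exists pi lam, is_qpeig T pi lam /\ fdeg pi = k].

Definition sigma1 (T : ratf -> ratf) : set R :=
  [set lam | exists pi, is_qpeig T pi lam].

End Jacobi.

(* Main.v *)
Require Import Defs.
From HB Require Import structures.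
From mathcomp Require Import all_boot all_order all_algebra.
From mathcomp Require Import boolp classical_sets cardinality reals.
Import Order.TTheory GRing.Theory Num.Theory.
Local Open Scope ring_scope.
Local Open Scope classical_set_scope.

From mathcomp Require Import ring lra zify.
Set Implicit Arguments. Unset Strict Implicit. Unset Printing Implicit Defensive.

Section S.
Variable R : realType.
Local Notation F := (ratf R).
Local Notation pF := (@polyF R).

Lemma polyF_rmorph : GRing.RMorphism.type {poly R} F.
Proof. exact: (@FracField.tofrac _). Qed.

Lemma pFD p q : pF (p + q) = pF p + pF q. Proof. exact: rmorphD. Qed.
Lemma pFB p q : pF (p - q) = pF p - pF q. Proof. exact: rmorphB. Qed.
Lemma pFN p : pF (- p) = - pF p. Proof. exact: rmorphN. Qed.
Lemma pFM p q : pF (p * q) = pF p * pF q. Proof. exact: rmorphM. Qed.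
Lemma pF1 : pF 1 = 1. Proof. exact: rmorph1. Qed.
Lemma pF0 : pF 0 = 0. Proof. exact: rmorph0. Qed.
Lemma pFX p n : pF (p ^+ n) = pF p ^+ n. Proof. exact: rmorphXn. Qed.
Lemma pFn n : pF n%:R = n%:R. Proof. exact: rmorph_nat. Qed.
Lemma pF_eq p q : (pF p == pF q) = (p == q). Proof. exact: tofrac_eq. Qed.
Lemma pF_eq0 p : (pF p == 0) = (p == 0). Proof. exact: tofrac_eq0. Qed.
Lemma pF_inj : injective pF. Proof. by move=> p q /eqP; rewrite pF_eq => /eqP. Qed.

Lemma frac_repr (f : F) : f = pF (\n_(repr f)) / pF (\d_(repr f)).
Proof.
rewrite /polyF; unlock FracField.tofrac.
rewrite /GRing.inv /GRing.mul /=. rewrite -FracField.pi_inv.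
rewrite -FracField.pi_mul /FracField.invf /FracField.mulf /= !numden_Ratio ?oner_neq0 // ?mul1r ?mulr1.
by rewrite Ratio_numden ?reprK. all: exact: denom_ratioP.
Qed.

End S.
Lemma gen_frac_eq (K : fieldType) (a b c d : K) : b != 0 -> d != 0 ->
  (a / b = c / d) <-> a * d = c * b.
Proof.
move=> b0 d0; split=> E.
  by rewrite -(divfK b0 a) E; field.
by apply/eqP; rewrite eqr_div // E.
Qed.
Lemma gen_add_frac (K : fieldType) (a b c d : K) : b != 0 -> d != 0 ->
  a / b + c / d = (a * d + c * b) / (b * d).
Proof. by move=> b0 d0; field; rewrite b0 d0. Qed.
Section S2.
Variable R : realType.
Local Notation F := (ratf R).
Local Notation pF := (@polyF R).
Lemma pF_frac_eq a b c d : b != 0 -> d != 0 ->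
  (pF a / pF b = pF c / pF d) <-> a * d = c * b.
Proof.
move=> b0 d0. 
have b0' : pF b != 0 by rewrite pF_eq0.
have d0' : pF d != 0 by rewrite pF_eq0.
rewrite (gen_frac_eq _ _ b0' d0') -!pFM.
split; [exact: pF_inj | by move->].
Qed.

Lemma repr_cross (n d : {poly R}) : d != 0 ->
  \n_(repr (pF n / pF d)) * d = n * \d_(repr (pF n / pF d)).
Proof.
move=> d0; set f := pF n / pF d.
have := frac_repr f; rewrite {1}/f => /esym/pF_frac_eq.
by move=> /(_ (denom_ratioP _) d0) ->.
Qed.

Lemma fderiv_frac n d : d != 0 ->
  fderiv (pF n / pF d) = pF (n^`() * d - n * d^`()) / pF (d ^+ 2).
Proof.
move=> d0; rewrite /fderiv.
have H := repr_cross n d0.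
move: (denom_ratioP (repr (pF n / pF d))).
move: H; set A := \n_ _; set B := \d_ _ => H B0.
apply/pF_frac_eq; rewrite ?expf_neq0 //.
have H' : A^`() * d + A * d^`() = n^`() * B + n * B^`().
  by rewrite -!derivM H.
apply/eqP; rewrite -subr_eq0; apply/eqP.
have -> : (A^`() * B - A * B^`()) * d ^+ 2 - (n^`() * d - n * d^`()) * B ^+ 2
   = d * B * ((A^`() * d + A * d^`()) - (n^`() * B + n * B^`()))
     - (A * d - n * B) * (B^`() * d + d^`() * B) by ring.
by rewrite H' H !subrr; ring.
Qed.

End S2.

Lemma gen_inv_deriv (K : fieldType) (f f' g' : K) :
  f' * f^-1 + f * g' = 0 -> f != 0 -> g' = - f' / f ^+ 2.
Proof.
move=> H f0; have H2 : f * g' = - (f' * f^-1).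
  by apply/eqP; rewrite -addr_eq0 addrC H.
have -> : g' = f^-1 * (f * g') by field.
by rewrite H2; field.
Qed.
Section S3.
Variable R : realType.
Local Notation F := (ratf R).
Local Notation pF := (@polyF R).
Lemma frac_ex (f : F) : exists n d, d != 0 /\ f = pF n / pF d.
Proof. exists (\n_(repr f)), (\d_(repr f)). split. exact: denom_ratioP. exact: (frac_repr f). Qed.
Lemma pF_add_frac a b c d : b != 0 -> d != 0 ->
  pF a / pF b + pF c / pF d = pF (a * d + c * b) / pF (b * d).
Proof.
move=> b0 d0; have b0' : pF b != 0 by rewrite pF_eq0.
have d0' : pF d != 0 by rewrite pF_eq0.
rewrite pFD !pFM. exact: (gen_add_frac (pF a) (pF c) b0' d0').
Qed.
Lemma pF_mul_frac a b c d :
  pF a / pF b * (pF c / pF d) = pF (a * c) / pF (b * d).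
Proof. rewrite !pFM invfM. ring. Qed.
Lemma fderiv_poly p : fderiv (pF p) = pF p^`().
Proof.
have -> : pF p = pF p / pF 1 by rewrite pF1 divr1.
rewrite (fderiv_frac p (oner_neq0 _)) derivC mulr0 subr0 mulr1 expr1n pF1 divr1.
by [].
Qed.

Lemma fderivD (f g : F) : fderiv (f + g) = fderiv f + fderiv g.
Proof.
have [n1 [d1 [d10 ->]]] := frac_ex f.
have [n2 [d2 [d20 ->]]] := frac_ex g.
have d12 : d1 * d2 != 0 by rewrite mulf_neq0.
rewrite (pF_add_frac n1 n2 d10 d20) (fderiv_frac _ d12) (fderiv_frac _ d10) (fderiv_frac _ d20).
rewrite pF_add_frac ?expf_neq0 //.
apply/pF_frac_eq; rewrite ?expf_neq0 ?mulf_neq0 //.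
rewrite !derivD !derivM. ring.
Qed.
Lemma fderivM (f g : F) : fderiv (f * g) = fderiv f * g + f * fderiv g.
Proof.
have [n1 [d1 [d10 ->]]] := frac_ex f.
have [n2 [d2 [d20 ->]]] := frac_ex g.
have d12 : d1 * d2 != 0 by rewrite mulf_neq0.
rewrite (pF_mul_frac n1 d1 n2 d2) (fderiv_frac _ d12) (fderiv_frac _ d10) (fderiv_frac _ d20).
rewrite !pF_mul_frac pF_add_frac ?expf_neq0 ?mulf_neq0 //.
apply/pF_frac_eq; rewrite ?expf_neq0 ?mulf_neq0 //.
rewrite !derivM; ring.
Qed.

Lemma fderiv1 : fderiv (1 : F) = 0.
Proof. by rewrite -pF1 fderiv_poly derivC pF0. Qed.

Lemma fderiv_cst c : fderiv (cstF c : F) = 0.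
Proof. by rewrite /cstF fderiv_poly derivC pF0. Qed.

Lemma fderivMc c (f : F) : fderiv (cstF c * f) = cstF c * fderiv f.
Proof. by rewrite fderivM fderiv_cst mul0r add0r. Qed.

Lemma fderivN (f : F) : fderiv (- f) = - fderiv f.
Proof.
have -> : - f = cstF (-1) * f by rewrite /cstF polyCN pFN pF1 mulN1r.
by rewrite fderivMc /cstF polyCN pFN pF1 mulN1r.
Qed.

Lemma fderivB (f g : F) : fderiv (f - g) = fderiv f - fderiv g.
Proof. by rewrite fderivD fderivN. Qed.

Lemma fderivV (f : F) : f != 0 -> fderiv (f^-1) = - fderiv f / f ^+ 2.
Proof.
move=> f0.
have H : fderiv (f * f^-1) = 0 by rewrite mulfV // fderiv1.
rewrite fderivM in H.
exact: (gen_inv_deriv H f0).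
Qed.
End S3.

Lemma gen_TL (K : fieldType) (t t1 t2 x ca cb f f1 f2 : K) :
  t != 0 -> x - 1 != 0 -> x + 1 != 0 ->
  t * ((x ^+ 2 - 1) * (f2 - 2%:R * (t1 / t) * f1 + (t2 / t) * f
        + (ca / (x - 1) + cb / (x + 1)) * (f1 - (t1 / t) * f))
       + 2%:R * x * (t1 / t) * f)
  = (x ^+ 2 - 1) * (t * f2 - 2%:R * t1 * f1 + t2 * f)
    + (ca * (x + 1) + cb * (x - 1)) * (t * f1 - t1 * f) + 2%:R * x * t1 * f.
Proof. move=> t0 xm xp; field; rewrite t0 xm xp //. Qed.

Section S4.
Variable R : realType.
Local Notation F := (ratf R).
Local Notation pF := (@polyF R).

Definition epoly (a b : R) : {poly R} := (a + 1)%:P * ('X + 1) + (b + 1)%:P * ('X - 1).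

Definition Lop (tau : {poly R}) (a b : R) (f : F) : F :=
  (xF R ^+ 2 - 1) * (pF tau * fderiv (fderiv f) - 2%:R * pF tau^`() * fderiv f
                     + pF tau^`(2) * f)
  + pF (epoly a b) * (pF tau * fderiv f - pF tau^`() * f)
  + 2%:R * xF R * pF tau^`() * f.

Lemma xFm1 : xF R - 1 = pF ('X - 1).
Proof. by rewrite pFB pF1. Qed.
Lemma xFp1 : xF R + 1 = pF ('X + 1).
Proof. by rewrite pFD pF1. Qed.
Lemma Xm1_neq0 : ('X - 1 : {poly R}) != 0.
Proof. by rewrite -polyC1 polyXsubC_eq0. Qed.
Lemma Xp1_neq0 : ('X + 1 : {poly R}) != 0.
Proof. by rewrite -size_poly_eq0 -polyC1 size_XaddC. Qed.

Lemma pF_epoly a b :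
  pF (epoly a b) = cstF (a + 1) * (xF R + 1) + cstF (b + 1) * (xF R - 1).
Proof. by rewrite /epoly pFD !pFM xFm1 xFp1. Qed.

Lemma Tng_L tau a b (f : F) : tau != 0 ->
  pF tau * Tng tau a b f = Lop tau a b f.
Proof.
move=> t0; rewrite /Tng /Lop /= /eta pF_epoly.
have t0' : pF tau != 0 by rewrite pF_eq0.
have xm : xF R - 1 != 0 by rewrite xFm1 pF_eq0 Xm1_neq0.
have xp : xF R + 1 != 0 by rewrite xFp1 pF_eq0 Xp1_neq0.
exact: (gen_TL (pF tau^`()) (pF tau^`(2)) (cstF (a + 1)) (cstF (b + 1))
   f (fderiv f) (fderiv (fderiv f)) t0' xm xp).
Qed.
End S4.

Lemma gen_invpow (K : fieldType) (G h h1 G1 n : K) :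
  G * h1 = n * h * G1 -> h != 0 -> G * (- h1 / h ^+ 2) = - n * h^-1 * G1.
Proof.
move=> E h0; have -> : G * (- h1 / h ^+ 2) = - (G * h1) / h ^+ 2 by ring.
by rewrite E; field; rewrite h0.
Qed.

Section S5.
Variable R : realType.
Local Notation F := (ratf R).
Local Notation pF := (@polyF R).

Lemma val1 (G G1 s k u : F) : G * fderiv s = k * s * G1 ->
  G * fderiv (s * u) = s * (k * G1 * u + G * fderiv u).
Proof.
move=> hs; rewrite fderivM.
have -> : G * (fderiv s * u + s * fderiv u) = (G * fderiv s) * u + s * G * fderiv u by ring.
rewrite hs; ring.
Qed.

Lemma val2 (G G1 s u : F) (c : R) : fderiv G = G1 -> G * fderiv s = cstF c * s * G1 ->
  G ^+ 2 * fderiv (fderiv (s * u)) =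
  s * (cstF c * (cstF c - 1) * G1 ^+ 2 * u
       + G * ((cstF c - 1) * G1 * fderiv u
              + fderiv (cstF c * G1 * u + G * fderiv u))).
Proof.
move=> hG hs; set k := cstF c.
have h1 := val1 u hs.
set w1 := k * G1 * u + G * fderiv u in h1 *.
have H : fderiv (G * fderiv (s * u)) = fderiv (s * w1) by rewrite h1.
rewrite (fderivM G) hG (fderivM s w1) in H.
have -> : G ^+ 2 * fderiv (fderiv (s * u))
   = G * (G1 * fderiv (s * u) + G * fderiv (fderiv (s * u))) - G1 * (G * fderiv (s * u)) by ring.
rewrite H h1.
have -> : G * (fderiv s * w1 + s * fderiv w1) - G1 * (s * w1)
   = (G * fderiv s) * w1 + G * s * fderiv w1 - G1 * (s * w1) by ring.
rewrite hs /w1; ring.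
Qed.

Lemma powG (G : F) n : G * fderiv (G ^+ n) = n%:R * G ^+ n * fderiv G.
Proof.
elim: n => [|n IH]; first by rewrite expr0 fderiv1 mulr0 mul0r mul0r.
rewrite exprS fderivM.
have -> : G * (fderiv G * G ^+ n + G * fderiv (G ^+ n))
  = G * G ^+ n * fderiv G + G * (G * fderiv (G ^+ n)) by ring.
by rewrite IH -natr1; ring.
Qed.

Lemma powGinv (G : F) n : G != 0 ->
  G * fderiv ((G ^+ n)^-1) = - n%:R * (G ^+ n)^-1 * fderiv G.
Proof.
move=> G0; rewrite fderivV ?expf_neq0 //.
exact: (gen_invpow (powG G n) (expf_neq0 n G0)).
Qed.

Definition Og (g : {poly R}) (f : F) := exists u v, ~~ (g %| v) /\ f = pF u / pF v.
Definition gprime (g : {poly R}) :=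
  (1 < size g)%N /\ forall u v, g %| u * v -> (g %| u) || (g %| v).

Variable g : {poly R}.
Hypothesis gp : gprime g.

Lemma gp_ndvd u v : ~~ (g %| u) -> ~~ (g %| v) -> ~~ (g %| u * v).
Proof. by move=> hu hv; apply/negP => /(proj2 gp) /orP [] ?; [move/negP: hu | move/negP: hv]. Qed.

Lemma ndvd_neq0 v : ~~ (g %| v) -> v != 0.
Proof. by apply: contra => /eqP ->; rewrite dvdp0. Qed.

Lemma g_ndvd1 : ~~ (g %| 1).
Proof. by rewrite dvdp1 neq_ltn (proj1 gp) orbT. Qed.

Lemma Og_poly p : Og g (pF p).
Proof. by exists p, 1; split; [exact: g_ndvd1 | rewrite pF1 divr1]. Qed.

Lemma Og_cst c : Og g (cstF c). Proof. exact: Og_poly. Qed.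
Lemma Og_nat n : Og g (n%:R). Proof. rewrite -pFn; exact: Og_poly. Qed.
Lemma Og_1 : Og g 1. Proof. rewrite -pF1; exact: Og_poly. Qed.

Lemma Og_add x y : Og g x -> Og g y -> Og g (x + y).
Proof.
move=> [u1 [v1 [h1 ->]]] [u2 [v2 [h2 ->]]].
exists (u1 * v2 + u2 * v1), (v1 * v2); split; first exact: gp_ndvd.
exact: pF_add_frac (ndvd_neq0 h1) (ndvd_neq0 h2).
Qed.

Lemma Og_mul x y : Og g x -> Og g y -> Og g (x * y).
Proof.
move=> [u1 [v1 [h1 ->]]] [u2 [v2 [h2 ->]]].
exists (u1 * u2), (v1 * v2); split; first exact: gp_ndvd.
exact: pF_mul_frac.
Qed.

Lemma Og_opp x : Og g x -> Og g (- x).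
Proof.
move=> [u [v [h ->]]]; exists (- u), v; split => //.
by rewrite pFN mulNr.
Qed.

Lemma Og_sub x y : Og g x -> Og g y -> Og g (x - y).
Proof. by move=> hx hy; apply: Og_add => //; apply: Og_opp. Qed.

Lemma Og_exp x n : Og g x -> Og g (x ^+ n).
Proof.
move=> hx; elim: n => [|n IH]; first by rewrite expr0; exact: Og_1.
by rewrite exprS; apply: Og_mul.
Qed.

Lemma Og_deriv x : Og g x -> Og g (fderiv x).
Proof.
move=> [u [v [h ->]]].
rewrite (fderiv_frac u (ndvd_neq0 h)).
exists (u^`() * v - u * v^`()), (v ^+ 2); split => //.
by rewrite expr2; apply: gp_ndvd.
Qed.

Lemma Og_dvd A B z : ~~ (g %| B) -> Og g z ->
  pF A / pF B = pF g * z -> g %| A.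
Proof.
move=> hB [u [v [hv ->]]] E.
have E' : pF A / pF B = pF (g * u) / pF v by rewrite E pFM mulrA.
move/(pF_frac_eq _ _ (ndvd_neq0 hB) (ndvd_neq0 hv)): E' => E2.
have : g %| A * v by rewrite E2 -mulrA dvdp_mulIl.
by move/(proj2 gp)/orP => [//|]; move/negP: hv.
Qed.
End S5.

Lemma keyA (K : comNzRingType) (X G G1 E lam T t t1 B s phi phi1 A Tau Tau1 Tau2 f f1 f2 k m : K) :
  Tau = T * t -> f = s * phi ->
  G * f1 = s * (k * G1 * phi + G * phi1) ->
  G ^+ 2 * f2 = s * (k * (k - 1) * G1 ^+ 2 * phi + G * A) ->
  G * Tau1 = T * (m * G1 * t + G * t1) ->
  G ^+ 2 * Tau2 = T * (m * (m - 1) * G1 ^+ 2 * t + G * B) ->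
  G ^+ 2 * ((X ^+ 2 - 1) * (Tau * f2 - 2%:R * Tau1 * f1 + Tau2 * f)
            + E * (Tau * f1 - Tau1 * f) + 2%:R * X * Tau1 * f - lam * (Tau * f))
  = T * s * ((k * (k - 1) - 2%:R * m * k + m * (m - 1)) * (X ^+ 2 - 1) * G1 ^+ 2 * t * phi
     + G * ((X ^+ 2 - 1) * (t * A - 2%:R * (m * G1 * t * phi1 + t1 * k * G1 * phi + G * t1 * phi1) + B * phi)
            + E * (t * (k * G1 * phi + G * phi1) - (m * G1 * t + G * t1) * phi)
            + 2%:R * X * (m * G1 * t + G * t1) * phi - G * lam * t * phi)).
Proof.
move=> hT hf h1 h2 hT1 hT2.
have -> : G ^+ 2 * ((X ^+ 2 - 1) * (Tau * f2 - 2%:R * Tau1 * f1 + Tau2 * f)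
            + E * (Tau * f1 - Tau1 * f) + 2%:R * X * Tau1 * f - lam * (Tau * f))
  = (X ^+ 2 - 1) * (Tau * (G ^+ 2 * f2) - 2%:R * (G * Tau1) * (G * f1) + (G ^+ 2 * Tau2) * f)
    + G * E * (Tau * (G * f1) - (G * Tau1) * f) + G * 2%:R * X * (G * Tau1) * f
    - G ^+ 2 * lam * (Tau * f) by ring.
rewrite h1 h2 hT1 hT2 hT hf; ring.
Qed.

Lemma keyB (K : comNzRingType) (X Y G G1 E ca cb lam s phi phi1 A Tau Tau1 Tau2 f f1 f2 k : K) :
  X ^+ 2 - 1 = G * Y -> E = ca * Y + cb * G -> f = s * phi ->
  G * f1 = s * (k * G1 * phi + G * phi1) ->
  G ^+ 2 * f2 = s * (k * (k - 1) * G1 ^+ 2 * phi + G * A) ->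
  G * ((X ^+ 2 - 1) * (Tau * f2 - 2%:R * Tau1 * f1 + Tau2 * f)
            + E * (Tau * f1 - Tau1 * f) + 2%:R * X * Tau1 * f - lam * (Tau * f))
  = s * ((k * (k - 1) * G1 ^+ 2 + ca * k * G1) * Y * Tau * phi
     + G * (Y * Tau * A - 2%:R * Y * Tau1 * (k * G1 * phi + G * phi1)
            + Y * G * Tau2 * phi + ca * Y * Tau * phi1
            + cb * Tau * (k * G1 * phi + G * phi1) - E * Tau1 * phi
            + 2%:R * X * Tau1 * phi - lam * Tau * phi)).
Proof.
move=> hX hE hf h1 h2; rewrite hX.
have -> : G * (G * Y * (Tau * f2 - 2%:R * Tau1 * f1 + Tau2 * f)
            + E * (Tau * f1 - Tau1 * f) + 2%:R * X * Tau1 * f - lam * (Tau * f))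
  = Y * (Tau * (G ^+ 2 * f2) - 2%:R * G * Tau1 * (G * f1) + G * G * Tau2 * f)
    + E * (Tau * (G * f1)) - G * E * Tau1 * f + G * 2%:R * X * Tau1 * f
    - G * lam * (Tau * f) by ring.
rewrite h1 h2 hf hE; ring.
Qed.

Section S6.
Variable R : realType.
Implicit Types p q g u v : {poly R}.

Lemma exists_prime_factor_aux n : forall q, (size q <= n)%N -> q != 0 -> (1 < size q)%N ->
  exists g, gprime g /\ g %| q.
Proof.
elim: n => [q sq|n IH q sq q0 q1]; first by move=> _ /(leq_trans)/(_ sq).
case: (pselect (exists d : {poly R}, [/\ (1 < size d)%N, (size d < size q)%N & d %| q])).
  move=> [d [d1 d2 d3]].
  have d0 : d != 0 by rewrite -size_poly_eq0 -lt0n (ltn_trans _ d1).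
  have sd : (size d <= n)%N by rewrite -ltnS (leq_trans d2 sq).
  have [g [gp gd]] := IH d sd d0 d1.
  by exists g; split => //; apply: dvdp_trans gd d3.
move=> nod; exists q; split; last exact: dvdpp.
split => // u v quv.
case qu: (q %| u) => //=.
have cop : coprimep q u.
  rewrite coprimep_def.
  have g0 : gcdp q u != 0 by rewrite gcdp_eq0 negb_and q0.
  have sg : (size (gcdp q u) <= size q)%N by apply: dvdp_leq q0 (dvdp_gcdl _ _).
  apply/negPn/negP => ne1.
  have gt1 : (1 < size (gcdp q u))%N.
    by rewrite ltn_neqAle eq_sym ne1 lt0n size_poly_eq0 g0.
  move: sg; rewrite leq_eqVlt => /orP [/eqP es|lt].
    have : gcdp q u %= q by rewrite -dvdp_size_eqp ?es ?dvdp_gcdl.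
    move/eqp_dvdl => e; move: (dvdp_gcdr q u); rewrite e qu //.
  by apply: nod; exists (gcdp q u); split => //; exact: dvdp_gcdl.
by rewrite -(Gauss_dvdpr v cop).
Qed.

Lemma exists_prime_factor p : p != 0 -> (1 < size p)%N -> exists g, gprime g /\ g %| p.
Proof. exact: (@exists_prime_factor_aux (size p) p (leqnn _)). Qed.

Lemma mult_decomp_aux n g : (1 < size g)%N -> forall p, (size p <= n)%N -> p != 0 ->
  exists r h, p = g ^+ r * h /\ ~~ (g %| h).
Proof.
move=> g1; elim: n => [p|n IH p sp p0].
  by rewrite leqn0 size_poly_eq0 => /eqP ->; rewrite eqxx.
case gp: (g %| p); last by exists 0%N, p; rewrite expr0 mul1r gp.
have ep := divpK gp.
have q0 : p %/ g != 0 by apply: contraNneq p0 => e; rewrite -ep e mul0r.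
have g0 : g != 0 by rewrite -size_poly_eq0 -lt0n (ltn_trans _ g1).
have sq : (size (divp p g) <= n)%N.
  have e : size p = predn (size (divp p g) + size g) by rewrite -{1}ep size_mul.
  move: sp g1; rewrite e; lia.
have [r [h [e hn]]] := IH _ sq q0.
by exists r.+1, h; split => //; rewrite -{1}ep e exprS; ring.
Qed.

Lemma mult_decomp g p : (1 < size g)%N -> p != 0 ->
  exists r h, p = g ^+ r * h /\ ~~ (g %| h).
Proof. by move=> g1; apply: (@mult_decomp_aux (size p) g g1 p (leqnn _)). Qed.

Lemma gprime_ndvd_deriv g : gprime g -> ~~ (g %| g^`()).
Proof.
move=> [g1 _].
have g0 : g != 0 by rewrite -size_poly_eq0 -lt0n (ltn_trans _ g1).
have d0 : g^`() != 0.
  apply/eqP => e; have := congr1 (fun p : {poly R} => p`_((size g).-2)) e.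
  rewrite coef_deriv coef0 /=.
  have -> : ((size g).-2.+1 = (size g).-1)%N by case: (size g) g1 => [|[|k]].
  move/eqP; rewrite mulrn_eq0 -lead_coefE lead_coef_eq0 (negbTE g0) orbF.
  by case: (size g) g1 => [|[|k]].
apply/negP => /(dvdp_leq d0); rewrite leqNgt lt_size_deriv //.
Qed.
End S6.

Section S7.
Variable R : realType.
Local Notation F := (ratf R).
Local Notation pF := (@polyF R).

Lemma cstFD x y : cstF (x + y) = cstF x + cstF y :> F.
Proof. by rewrite /cstF polyCD pFD. Qed.
Lemma cstFM x y : cstF (x * y) = cstF x * cstF y :> F.
Proof. by rewrite /cstF polyCM pFM. Qed.
Lemma cstFN x : cstF (- x) = - cstF x :> F.
Proof. by rewrite /cstF polyCN pFN. Qed.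
Lemma cstFB x y : cstF (x - y) = cstF x - cstF y :> F.
Proof. by rewrite cstFD cstFN. Qed.
Lemma cstF1 : cstF 1 = 1 :> F.
Proof. by rewrite /cstF polyC1 pF1. Qed.
Lemma cstF_nat n : cstF n%:R = n%:R :> F.
Proof. by rewrite /cstF polyC_natr pFn. Qed.

Lemma g_root (g D : {poly R}) c : (1 < size g)%N -> g %| ('X - c%:P) -> g %| D -> root D c.
Proof.
move=> g1 gx gD.
have sg : leq (size g) (size ('X - c%:P)) by rewrite dvdp_leq ?polyXsubC_eq0.
rewrite size_XsubC in sg.
have : g %= 'X - c%:P by rewrite -dvdp_size_eqp // size_XsubC eqn_leq sg g1.
by move/eqp_dvdl => e; rewrite -dvdp_XsubCl -e.
Qed.

Lemma cop_ndvd (g u v : {poly R}) : (1 < size g)%N -> coprimep u v -> g %| u -> ~~ (g %| v).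
Proof.
move=> g1 /coprimepP c gu; apply/negP => gv.
have := eqp_size (c g gu gv); rewrite size_poly1 => e; by rewrite e in g1.
Qed.

Lemma XsqE : ('X ^+ 2 - 1 : {poly R}) = ('X - 1%:P) * ('X - (-1)%:P).
Proof. by rewrite polyCN opprK polyC1; ring. Qed.

Ltac og := repeat match goal with
 | |- Og _ (_ + _) => apply: Og_add
 | |- Og _ (- _) => apply: Og_opp
 | |- Og _ (_ * _) => apply: Og_mul
 | |- Og _ (_ ^+ _) => apply: Og_exp
 | |- Og _ (fderiv _) => apply: Og_deriv
 | |- Og _ (polyF _) => apply: Og_poly
 | |- Og _ (cstF _) => apply: Og_cst
 | |- Og _ (xF _) => apply: Og_poly
 | |- Og _ 1 => apply: Og_1
 | |- Og _ (_%:R) => apply: Og_nat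
 | |- _ => assumption
 end.

Lemma ratsol_poly tau a b lam (Fp D : {poly R}) :
  tau != 0 -> ~~ root D 1 -> ~~ root D (-1) ->
  Lop tau a b (pF Fp / pF D) = pF tau * (cstF lam * (pF Fp / pF D)) ->
  exists P, pF Fp / pF D = pF P.
Proof.
move=> t0 D1r Dm1r Eq.
have D0 : D != 0 by apply: contraNneq D1r => ->; rewrite root0.
have [->|Fp0] := eqVneq Fp 0; first by exists 0; rewrite pF0 mul0r.
set d := gcdp Fp D.
have d0 : d != 0 by rewrite gcdp_eq0 negb_and Fp0.
set F1 := Fp %/ d; set D1 := D %/ d.
have eF : F1 * d = Fp by rewrite divpK // dvdp_gcdl.
have eD : D1 * d = D by rewrite divpK // dvdp_gcdr.
have cop : coprimep F1 D1 by apply: coprimep_div_gcd; rewrite Fp0.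
have D10 : D1 != 0 by apply: contraNneq D0 => e; rewrite -eD e mul0r.
have ef : pF Fp / pF D = pF F1 / pF D1.
  by apply/pF_frac_eq => //; rewrite -eF -eD; ring.
rewrite ef in Eq *.
case: (boolP (size D1 == 1%N)) => [/size_poly1P [c c0 ec]|sD1].
  exists (c^-1%:P * F1).
  rewrite -[pF (c^-1%:P * F1)]divr1 -pF1; apply/pF_frac_eq; rewrite ?oner_neq0 // ec mulr1.
  by rewrite mulrAC -polyCM mulVf // polyC1 mul1r.
have sD1' : (1 < size D1)%N.
  by move: sD1 D10; rewrite -size_poly_eq0; case: (size D1) => [|[|k]].
have [g [gp gD1]] := exists_prime_factor D10 sD1'.
have g1 := proj1 gp.
have [r [H [eD1 gH]]] := mult_decomp g1 D10.
have [m [t0p [etau gt]]] := mult_decomp g1 t0.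
have gF1 : ~~ (g %| F1).
  by apply/negP => gF; move: (cop_ndvd g1 cop gF); rewrite gD1.
have gD : g %| D by rewrite -eD dvdp_mulr.
have gxm : ~~ (g %| ('X - 1%:P)) by apply/negP => gx; move: D1r; rewrite (g_root g1 gx gD).
have gxp : ~~ (g %| ('X - (-1)%:P)) by apply/negP => gx; move: Dm1r; rewrite (g_root g1 gx gD).
have r0 : (0 < r)%N.
  by case: r eD1 => // e; move: gD1; rewrite e expr0 mul1r => gH'; move: gH; rewrite gH'.
set G := pF g; set G1 := pF g^`().
have G0 : G != 0 by rewrite pF_eq0 -size_poly_eq0 -lt0n (ltn_trans _ g1).
set s := (G ^+ r)^-1.
set phi := pF F1 / pF H.
have hphi : Og g phi by exists F1, H.
have ef2 : pF F1 / pF D1 = s * phi by rewrite eD1 pFM pFX /s /phi invfM; ring.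
set T := G ^+ m; set t := pF t0p.
have etau' : pF tau = T * t by rewrite etau pFM pFX.
have hG : fderiv G = G1 by rewrite fderiv_poly.
have hs : G * fderiv s = cstF (- r%:R) * s * G1 by rewrite powGinv // hG cstFN cstF_nat.
have hT : G * fderiv T = cstF (m%:R) * T * G1 by rewrite powG hG cstF_nat.
have h1 := val1 phi hs.
have h2 := val2 phi hG hs.
have hT1 := val1 t hT.
have hT2 := val2 t hG hT.
have pt1 : pF tau^`() = fderiv (T * t) by rewrite -etau' fderiv_poly.
have pt2 : pF tau^`(2) = fderiv (pF tau^`()) by rewrite fderiv_poly.
rewrite -pt1 in hT1 hT2; rewrite -pt2 in hT2.
rewrite ef2 in Eq.
have K0 := @keyA F (xF R) G G1 (pF (epoly a b)) (cstF lam) T t _ _ s phi _ _ (pF tau)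
  (pF tau^`()) (pF tau^`(2)) (s * phi) (fderiv (s * phi)) (fderiv (fderiv (s * phi)))
  (cstF (- r%:R)) (cstF m%:R) etau' (erefl _) h1 h2 hT1 hT2.
have K1 : G ^+ 2 * (Lop tau a b (s * phi) - cstF lam * (pF tau * (s * phi))) = _ := K0.
rewrite Eq in K1.
move: K1; set Y := (_ * (xF R ^+ 2 - 1) * G1 ^+ 2 * t * phi); set Z := (_ + _ + _ - _).
move=> K1.
have TS0 : T * s != 0 by rewrite mulf_neq0 ?invr_eq0 ?expf_neq0.
have YZ : Y + G * Z = 0.
  apply/eqP; rewrite -(mulrI_eq0 _ (mulfI TS0)) -K1; apply/eqP; ring.
have eY : Y = pF g * (- Z) by move/eqP: YZ; rewrite addr_eq0 => /eqP ->; rewrite mulrN.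
have ht : Og g t by exact: Og_poly.
have hGo : Og g G by exact: Og_poly.
have hG1o : Og g G1 by exact: Og_poly.
have hZ : Og g (- Z) by rewrite /Z; og.
pose c0 : R := (1 *- r) * ((1 *- r) - 1) - 2%:R * m%:R * (1 *- r) + m%:R * (m%:R - 1).
have ec : cstF c0 = (cstF (1 *- r) * (cstF (1 *- r) - 1) - 2%:R * cstF m%:R * cstF (1 *- r) +
     cstF m%:R * (cstF m%:R - 1)).
  by rewrite /c0 !(cstFD, cstFM, cstFN, cstF_nat, cstF1).
pose A0 := c0%:P * ('X ^+ 2 - 1) * g^`() ^+ 2 * t0p * F1.
have eA : Y = pF A0 / pF H.
  rewrite /Y -ec /A0 /phi /t /G1 /xF /cstF !(pFM, pFB, pFX, pF1); ring.
rewrite eA in eY.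
have gA := Og_dvd gp gH hZ eY.
have c00 : c0 != 0.
  have hr : (1 <= r%:R :> R) by rewrite ler1n.
  have hm : (0 <= m%:R :> R) by rewrite ler0n.
  rewrite /c0 -mulNrn; apply/lt0r_neq0 => //; nra.
exfalso; suff : ~~ (g %| A0) by rewrite gA.
have gd := gprime_ndvd_deriv gp.
rewrite /A0 XsqE expr2.
repeat apply: (gp_ndvd gp) => //.
apply/negP => /dvdp_leq; rewrite polyC_eq0 c00 size_polyC c00 => /(_ isT).
by rewrite leqNgt g1.
Qed.
End S7.

Section S8.
Variable R : realType.
Local Notation F := (ratf R).
Local Notation pF := (@polyF R).

Ltac og8 := repeat match goal with
 | |- Og _ (_ + _) => apply: Og_add
 | |- Og _ (- _) => apply: Og_opp
 | |- Og _ (_ * _) => apply: Og_mul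
 | |- Og _ (_ ^+ _) => apply: Og_exp
 | |- Og _ (fderiv _) => apply: Og_deriv
 | |- Og _ (polyF _) => apply: Og_poly
 | |- Og _ (cstF _) => apply: Og_cst
 | |- Og _ (xF _) => apply: Og_poly
 | |- Og _ 1 => apply: Og_1
 | |- Og _ (_%:R) => apply: Og_nat
 | |- _ => assumption
 end.

Lemma gprime_XsubC (c : R) : gprime ('X - c%:P).
Proof.
split; first by rewrite size_XsubC.
by move=> u v; rewrite !dvdp_XsubCl rootM.
Qed.

Lemma eig_root tau a b lam (P Yp : {poly R}) (c ca cb : R) :
  xF R ^+ 2 - 1 = pF ('X - c%:P) * pF Yp ->
  pF (epoly a b) = cstF ca * pF Yp + cstF cb * pF ('X - c%:P) ->
  ~~ root Yp c -> ~~ root tau c -> P != 0 ->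
  (forall m : nat, ca - 1 != - (m.+1)%:R) ->
  Lop tau a b (pF P) = pF tau * (cstF lam * pF P) -> ~~ root P c.
Proof.
move=> hX hE rY rt P0 hca Eq; apply/negP => rP.
set g := 'X - c%:P.
have gp := gprime_XsubC c.
have [r [H [eP gH]]] := mult_decomp (proj1 gp) P0.
have r0 : (0 < r)%N.
  case: r eP => // e; move: gH; rewrite expr0 mul1r in e; rewrite -e /g dvdp_XsubCl rP //.
set G := pF g.
have G1E : fderiv G = 1 by rewrite fderiv_poly /g derivB derivX derivC subr0 pF1.
set s := G ^+ r.
set phi := pF H.
have hphi : Og g phi by exact: Og_poly.
have ef : pF P = s * phi by rewrite eP pFM pFX.
have hs : G * fderiv s = cstF (r%:R) * s * 1 by rewrite powG G1E cstF_nat.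
have h1 := val1 phi hs.
have h2 := val2 phi G1E hs.
rewrite ef in Eq.
have K0 := @keyB F (xF R) (pF Yp) G 1 (pF (epoly a b)) (cstF ca) (cstF cb) (cstF lam) s phi _ _
  (pF tau) (pF tau^`()) (pF tau^`(2)) (s * phi) (fderiv (s * phi)) (fderiv (fderiv (s * phi)))
  (cstF r%:R) hX hE (erefl _) h1 h2.
have K1 : G * (Lop tau a b (s * phi) - cstF lam * (pF tau * (s * phi))) = _ := K0.
rewrite Eq in K1.
move: K1; set Y := (_ * pF Yp * pF tau * phi); set Z := (_ + _ + _ - _).
move=> K1.
have s0 : s != 0 by rewrite expf_neq0 // pF_eq0 polyXsubC_eq0.
have YZ : Y + G * Z = 0.
  apply/eqP; rewrite -(mulrI_eq0 _ (mulfI s0)) -K1; apply/eqP; ring.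
have eY : Y = pF g * - Z by move/eqP: YZ; rewrite addr_eq0 => /eqP ->; rewrite mulrN.
have hGo : Og g G by exact: Og_poly.
have hZ : Og g (- Z) by rewrite /Z; og8.
pose c0 : R := r%:R * (r%:R - 1) + ca * r%:R.
have ec : cstF c0 = cstF r%:R * (cstF r%:R - 1) * 1 ^+ 2 + cstF ca * cstF r%:R * 1.
  by rewrite /c0 expr1n !mulr1 !(cstFD, cstFM, cstFN, cstF_nat, cstF1).
pose A0 := c0%:P * Yp * tau * H.
have eA : Y = pF A0 / pF 1.
  by rewrite /Y -ec /A0 /phi /cstF !(pFM, pF1) divr1.
rewrite eA in eY.
have gA := Og_dvd gp (g_ndvd1 gp) hZ eY.
have c00 : c0 != 0.
  rewrite /c0; apply/negP => /eqP e.
  have e2 : r%:R * (r%:R - 1 + ca) = r%:R * (r%:R - 1) + ca * r%:R :> R. by ring.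
  rewrite e in e2.
  move/eqP: e2; rewrite mulf_eq0 pnatr_eq0 => /orP [/eqP r00|]; first by rewrite r00 in r0.
  move=> /eqP e3; move: (hca r.-1); rewrite prednK // => /eqP; apply.
  have -> : ca - 1 = - r%:R + (r%:R - 1 + ca) by ring.
  by rewrite e3 addr0.
suff : ~~ (g %| A0) by rewrite gA.
rewrite /A0; repeat apply: (gp_ndvd gp) => //.
- apply/negP => /dvdp_leq; rewrite polyC_eq0 c00 size_polyC c00 => /(_ isT).
  by rewrite leqNgt (proj1 gp).
- by rewrite /g dvdp_XsubCl.
- by rewrite /g dvdp_XsubCl.
Qed.
End S8.

Section S9.
Variable R : realType.
Local Notation F := (ratf R).
Local Notation pF := (@polyF R).
Implicit Types A B P : {poly R}.

Lemma coef_top A B a b : (size A <= a.+1)%N -> (size B <= b.+1)%N ->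
  (A * B)`_(a + b) = A`_a * B`_b.
Proof.
move=> sA sB; rewrite coefM.
have ha : (a < (a + b).+1)%N by rewrite ltnS leq_addr.
rewrite (bigD1 (Ordinal ha)) //= big1 ?addr0; first by rewrite addKn.
move=> [j hj] /= /eqP nj.
have nj' : j != a by apply/eqP => e; apply: nj; apply: val_inj.
case: (ltngtP j a) nj' => // hja _.
  rewrite [B`__]nth_default ?mulr0 //; apply: leq_trans sB _; lia.
rewrite [A`__]nth_default ?mul0r //; apply: leq_trans sA _; lia.
Qed.

Lemma coef_low A B a b : (size A <= a.+1)%N -> (size B <= b)%N -> (A * B)`_(a + b) = 0.
Proof.
move=> sA sB; rewrite nth_default //; apply: leq_trans (size_polyMleq A B) _; lia.
Qed.

Lemma coef_low2 A B a b : (size A <= a)%N -> (size B <= b.+1)%N -> (A * B)`_(a + b) = 0.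
Proof.
move=> sA sB; rewrite nth_default //; apply: leq_trans (size_polyMleq A B) _; lia.
Qed.

Lemma size_Xmul A : leq (size ('X * A)) (size A).+1.
Proof. apply: leq_trans (size_polyMleq _ _) _; rewrite size_polyX; lia. Qed.

Lemma size_der A : leq (size A^`()) (size A).-1.
Proof.
have [->|A0] := eqVneq A 0; first by rewrite deriv0 size_poly0.
by have := lt_size_deriv A0; lia.
Qed.

Lemma coef_X1 A n : ('X * A^`())`_n = n%:R * A`_n.
Proof.
rewrite coefXM; case: n => [|n]; first by rewrite eqxx mul0r.
by rewrite -[(n.+1 == 0)%N]/false coef_deriv mulr_natl.
Qed.

Lemma coef_X2 A n : ('X * ('X * A^`()^`()))`_n = n%:R * (n%:R - 1) * A`_n.
Proof.
rewrite coefXM; case: n => [|n]; first by rewrite eqxx mul0r mul0r.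
rewrite -[(n.+1 == 0)%N]/false coefXM; case: n => [|n]; first by rewrite eqxx subrr mulr0 mul0r.
rewrite -[(n.+1 == 0)%N]/false -[n.+2.-1]/n.+1 -[n.+1.-1]/n.
rewrite !coef_deriv -mulrnA -[A`_n.+2 *+ _]mulr_natl natrM.
have -> : (n.+2%:R : R) - 1 = n.+1%:R by rewrite -[n.+2%:R]natr1 addrK.
by [].
Qed.
End S9.

Section S10.
Variable R : realType.
Local Notation F := (ratf R).
Local Notation pF := (@polyF R).
Implicit Types A B P : {poly R}.

Definition Lpoly tau a b P : {poly R} :=
  ('X ^+ 2 - 1) * (tau * P^`()^`() - 2%:R * tau^`() * P^`() + tau^`(2) * P)
  + epoly a b * (tau * P^`() - tau^`() * P) + 2%:R * 'X * tau^`() * P.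

Lemma Lop_poly tau a b P : Lop tau a b (pF P) = pF (Lpoly tau a b P).
Proof.
rewrite /Lop /Lpoly !fderiv_poly.
rewrite /xF !(pFD, pFB, pFN, pFM, pFX, pF1, pFn); ring.
Qed.

Lemma size_XmulP A k : leq (size A) k.-1 -> leq (size ('X * A)) k.
Proof.
have [->|A0] := eqVneq A 0; first by rewrite mulr0 size_poly0.
rewrite mulrC size_mulX //; move: A0; rewrite -size_poly_eq0; lia.
Qed.

Lemma coefnM n A i : ((n%:R : {poly R}) * A)`_i = n%:R * A`_i.
Proof. by rewrite -polyC_natr coefCM. Qed.

Lemma eig_deg tau a b lam P : tau != 0 -> P != 0 ->
  Lop tau a b (pF P) = pF tau * (cstF lam * pF P) ->
  lam = ((size P).-1%:R - (size tau).-1%:R) * ((size P).-1%:R - (size tau).-1%:R + a + b + 1).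
Proof.
move=> t0 P0 Eq.
have E : Lpoly tau a b P = lam%:P * (tau * P).
  by apply: pF_inj; rewrite -Lop_poly Eq /cstF !pFM; ring.
set n := (size P).-1; set N := (size tau).-1.
have sP : size P = n.+1 by rewrite /n prednK // lt0n size_poly_eq0.
have st : size tau = N.+1 by rewrite /N prednK // lt0n size_poly_eq0.
have eL : Lpoly tau a b P =
  tau * ('X * ('X * P^`()^`())) - tau * P^`()^`()
  - 2%:R * (('X * tau^`()) * ('X * P^`())) + 2%:R * (tau^`() * P^`())
  + ('X * ('X * tau^`()^`())) * P - tau^`()^`() * P
  + (a + 1)%:P * (tau * ('X * P^`())) + (b + 1)%:P * (tau * ('X * P^`()))
  + (a + 1)%:P * (tau * P^`()) - (b + 1)%:P * (tau * P^`())
  - (a + 1)%:P * (('X * tau^`()) * P) - (b + 1)%:P * (('X * tau^`()) * P)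
  - (a + 1)%:P * (tau^`() * P) + (b + 1)%:P * (tau^`() * P)
  + 2%:R * (('X * tau^`()) * P).
  by rewrite /Lpoly /epoly; ring.
have := congr1 (fun q : {poly R} => q`_(N + n)) E.
rewrite eL coefCM.
have sP1 : leq (size P^`()) n by exact: size_der.
have sP2 : leq (size P^`()^`()) n.-1 by apply: leq_trans (size_der _) _; rewrite -!subn1 leq_sub2r.
have st1 : leq (size tau^`()) N by exact: size_der.
have st2 : leq (size tau^`()^`()) N.-1 by apply: leq_trans (size_der _) _; rewrite -!subn1 leq_sub2r.
have sXP1 : leq (size ('X * P^`())) n.+1 by apply: size_XmulP.
have sXP2' : leq (size ('X * P^`()^`())) n by apply: size_XmulP.
have sXP2 : leq (size ('X * ('X * P^`()^`()))) n.+1 by apply: size_XmulP.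
have sXt1 : leq (size ('X * tau^`())) N.+1 by apply: size_XmulP.
have sXt2' : leq (size ('X * tau^`()^`())) N by apply: size_XmulP.
have sXt2 : leq (size ('X * ('X * tau^`()^`()))) N.+1 by apply: size_XmulP.
have sP' : leq (size P) n.+1 by rewrite sP.
have st' : leq (size tau) N.+1 by rewrite st.
have sP2n : leq (size P^`()^`()) n by apply: leq_trans sP2 _; apply: leq_pred.
rewrite !(coefD, coefN, coefCM, coefnM).
rewrite (coef_top st' sXP2) (coef_low st' sP2n) (coef_top sXt1 sXP1) (coef_low2 st1 (leqW sP1)).
have st2N : leq (size tau^`()^`()) N by apply: leq_trans st2 _; apply: leq_pred.
rewrite (coef_top sXt2 sP') (coef_low2 st2N sP').
rewrite (coef_top st' sXP1) (coef_low st' sP1) (coef_top sXt1 sP') (coef_low2 st1 sP').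
rewrite (coef_top st' sP') !coef_X1 !coef_X2.
have tp0 : tau`_N * P`_n != 0.
  by rewrite mulf_neq0 // -lead_coefE lead_coef_eq0.
move=> H; apply: (mulIf tp0); rewrite -H; ring.
Qed.
End S10.

Lemma gen_trg (K : fieldType) (t X c pi : K) : t != 0 ->
  t^-1 * X = c * pi -> t * X = t * (c * (t * pi)).
Proof. move=> t0 E; have -> : X = t * (t^-1 * X) by field.
by rewrite E; field; rewrite ?t0. Qed.

Lemma gen_trg2 (K : fieldType) (t X c P : K) : t != 0 ->
  t^-1 * X = c * (P / t) -> X = c * P.
Proof. move=> t0 E; have -> : X = t * (t^-1 * X) by field.
by rewrite E; field; rewrite ?t0. Qed.

Lemma gen_trg3 (K : fieldType) (t X c P : K) : t != 0 ->
  X = c * P -> t^-1 * X = c * (P / t).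
Proof. by move=> t0 ->; field; rewrite ?t0. Qed.

Lemma gen_div (K : fieldType) (t pi P : K) : t != 0 -> t * pi = P -> pi = P / t.
Proof. by move=> t0 <-; field; rewrite ?t0. Qed.

Lemma gen_mulK (K : fieldType) (t P : K) : t != 0 -> t * (P / t) = P.
Proof. by move=> t0; field; rewrite ?t0. Qed.

Section S11.
Variable R : realType.
Local Notation F := (ratf R).
Local Notation pF := (@polyF R).

Lemma Ppm_neq0 (p : {poly R}) : Ppm p -> p != 0.
Proof. by move=> [h _]; apply: contraNneq h => ->; rewrite horner0. Qed.

Lemma fdeg_frac (P Q : {poly R}) : P != 0 -> Q != 0 ->
  fdeg (pF P / pF Q) = (size P)%:Z - (size Q)%:Z.
Proof.
move=> P0 Q0; rewrite /fdeg.
have H := repr_cross P Q0.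
move: (denom_ratioP (repr (pF P / pF Q))).
move: H; set A := \n_ _; set B := \d_ _ => H B0.
have A0 : A != 0 by apply: contraNneq (mulf_neq0 P0 B0) => e; rewrite -H e mul0r.
have : size (A * Q) = size (P * B) by rewrite H.
rewrite !size_mul //.
move: A0 B0 P0 Q0; rewrite -!size_poly_gt0 => ha hb hp hq e.
have e2 : (size A + size Q = size P + size B)%N.
  move: e ha hb hp hq; rewrite -!subn1; move: (size A) (size B) (size P) (size Q) => x y z w; lia.
move: e2; move: (size A) (size B) (size P) (size Q) => x y z w e2; lia.
Qed.

Lemma trg_lop tau a b (pi : F) lam : tau != 0 ->
  Trg tau a b pi = cstF lam * pi ->
  Lop tau a b (pF tau * pi) = pF tau * (cstF lam * (pF tau * pi)).
Proof.
move=> t0 E; have t0' : pF tau != 0 by rewrite pF_eq0.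
by rewrite -Tng_L //; apply: gen_trg.
Qed.

Lemma eig_lop tau a b P mu : tau != 0 -> is_eigpoly (Tng tau a b) P mu ->
  Lop tau a b (pF P) = pF tau * (cstF mu * pF P).
Proof. by move=> t0 [_ E]; rewrite -Tng_L // E. Qed.

Lemma part1 tau a b (pi : F) lam : Ppm tau -> is_qpeig (Trg tau a b) pi lam ->
  exists P, [/\ Ppm P, is_eigpoly (Tng tau a b) P lam, pi = pF P / pF tau &
     fdeg pi = ((size P).-1)%:Z - ((size tau).-1)%:Z].
Proof.
move=> tP [[p [q [pp [pq epi]]]] E].
have t0 := Ppm_neq0 tP; have t0' : pF tau != 0 by rewrite pF_eq0.
have q0 := Ppm_neq0 pq; have p0 := Ppm_neq0 pp.
have L := trg_lop t0 E.
have ef : pF tau * pi = pF (tau * p) / pF q by rewrite epi pFM mulrA.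
rewrite ef in L.
have [q1 qm1] := pq.
have [P eP] := ratsol_poly t0 (q1 : ~~ root q 1) (qm1 : ~~ root q (-1)) L.
have ePq : tau * p * 1 = P * q.
  by apply/(pF_frac_eq _ _ q0 (oner_neq0 _)); rewrite -eP pF1 divr1.
rewrite mulr1 in ePq.
have epi2 : pi = pF P / pF tau by apply: gen_div => //; rewrite ef eP.
have P0 : P != 0 by apply: contra_eqN ePq => /eqP ->; rewrite mul0r mulf_neq0.
have PP : Ppm P.
  have [t1 tm1] := tP; have [p1 pm1] := pp.
  split.
    by apply: contra_eqN (congr1 (fun r => r.[1]) ePq) => /eqP e /=; rewrite !hornerM e mul0r mulf_neq0.
  by apply: contra_eqN (congr1 (fun r => r.[-1]) ePq) => /eqP e /=; rewrite !hornerM e mul0r mulf_neq0.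
exists P; split => //.
- split => //; rewrite epi2 in E; move: E; rewrite /Trg gen_mulK //.
  exact: gen_trg2.
- rewrite epi2 fdeg_frac //; move: (P0) (t0); rewrite -!size_poly_gt0; lia.
Qed.
End S11.

Section S12.
Variable R : realType.
Local Notation F := (ratf R).
Local Notation pF := (@polyF R).

Lemma eig_Ppm tau a b (P : {poly R}) mu : Ppm tau ->
  (forall m : nat, a != - (m.+1)%:R) -> (forall m : nat, b != - (m.+1)%:R) ->
  is_eigpoly (Tng tau a b) P mu -> Ppm P.
Proof.
move=> tP ha hb eig.
have t0 := Ppm_neq0 tP.
have L := eig_lop t0 eig.
have P0 := eig.1.
have [t1 tm1] := tP.
split.
  have hX : xF R ^+ 2 - 1 = pF ('X - 1%:P) * pF ('X + 1).
    rewrite /xF polyC1 -pFM.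
    have -> : ('X - 1) * ('X + 1) = 'X ^+ 2 - 1 :> {poly R} by ring.
    by rewrite pFB pFX pF1.
  have hE : pF (epoly a b) = cstF (a + 1) * pF ('X + 1) + cstF (b + 1) * pF ('X - 1%:P).
    by rewrite pF_epoly xFp1 xFm1 polyC1.
  have rY : ~~ root ('X + 1 : {poly R}) 1.
    by rewrite rootE !hornerE; apply/negP => /eqP h; move: h; clear; move=> h; lra.
  have hca : forall m : nat, (a + 1) - 1 != - (m.+1)%:R by move=> m; rewrite addrK.
  exact: (eig_root hX hE rY (t1 : ~~ root tau 1) P0 hca L).
have eXp : ('X + 1 : {poly R}) = 'X - (-1)%:P by rewrite polyCN opprK polyC1.
have hX : xF R ^+ 2 - 1 = pF ('X - (-1)%:P) * pF ('X - 1%:P).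
  rewrite /xF -eXp polyC1 -pFM.
  have -> : ('X + 1) * ('X - 1) = 'X ^+ 2 - 1 :> {poly R} by ring.
  by rewrite pFB pFX pF1.
have hE : pF (epoly a b) = cstF (b + 1) * pF ('X - 1%:P) + cstF (a + 1) * pF ('X - (-1)%:P).
  by rewrite pF_epoly xFp1 xFm1 polyC1 -eXp addrC.
have rY : ~~ root ('X - 1%:P : {poly R}) (-1).
  by rewrite root_XsubC; apply/negP => /eqP h; move: h; clear; move=> h; lra.
have hcb : forall m : nat, (b + 1) - 1 != - (m.+1)%:R by move=> m; rewrite addrK.
exact: (eig_root hX hE rY (tm1 : ~~ root tau (-1)) P0 hcb L).
Qed.

Lemma qp_of_eig tau a b (P : {poly R}) mu : Ppm tau -> Ppm P ->
  is_eigpoly (Tng tau a b) P mu ->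
  is_qpeig (Trg tau a b) (pF P / pF tau) mu /\
  fdeg (pF P / pF tau) = ((size P).-1)%:Z - ((size tau).-1)%:Z.
Proof.
move=> tP PP eig.
have t0 := Ppm_neq0 tP; have P0 := Ppm_neq0 PP.
have t0' : pF tau != 0 by rewrite pF_eq0.
split.
  split; first by exists P, tau.
  rewrite /Trg gen_mulK // eig.2; exact: gen_trg3.
rewrite fdeg_frac //; move: (P0) (t0); rewrite -!size_poly_gt0.
move: (size P) (size tau) => x y; lia.
Qed.
End S12.

Unset Implicit Arguments.
Theorem mainTheorem5 (R : realType) (tau : {poly R}) (a b : R) :
  Ppm tau -> exceptional (Tng tau a b) ->
  (forall (pi : ratf R) (lam : R), is_qpeig (Trg tau a b) pi lam ->
     exists (P : {poly R}) (n : nat),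
       Ppm P /\ (exists mu, is_eigpoly (Tng tau a b) P mu) /\ (size P).-1 = n
       /\ pi = polyF P / polyF tau
       /\ I1 (Trg tau a b) (fdeg pi)
       /\ fdeg pi = n%:Z - ((size tau).-1)%:Z) /\
  ((forall m : nat, a != - (m.+1)%:R) -> (forall m : nat, b != - (m.+1)%:R) ->
     I1 (Trg tau a b) = [set (n%:Z - ((size tau).-1)%:Z) | n in Ipoly (Tng tau a b)]
     /\ sigmaP (Tng tau a b) = sigma1 (Trg tau a b)
     /\ sigma1 (Trg tau a b)
        = [set (k%:~R * (k%:~R + a + b + 1)) | k in I1 (Trg tau a b)]).
Proof.
move=> tP _.
have t0 := Ppm_neq0 tP.
have lamE : forall (pi : ratf R) lam, is_qpeig (Trg tau a b) pi lam ->
    (fdeg pi)%:~R * ((fdeg pi)%:~R + a + b + 1) = lam.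
  move=> pi lam qp; have [P [PP eig epi fd]] := part1 tP qp.
  rewrite fd intrB -!pmulrn.
  by rewrite [RHS](eig_deg t0 (Ppm_neq0 PP) (eig_lop t0 eig)).
split.
  move=> pi lam qp; have [P [PP eig epi fd]] := part1 tP qp.
  exists P, (size P).-1; do !split => //.
    by exists lam.
  by exists pi, lam.
move=> ha hb.
split; [|split].
- apply/seteqP; split => k /=.
    move=> [pi [lam [qp <-]]]; have [P [PP eig epi fd]] := part1 tP qp.
    by exists (size P).-1; [exists P, lam | rewrite fd].
  move=> [n [P [lam [eig <-]]] <-].
  have PP := eig_Ppm tP ha hb eig.
  have [qp fd] := qp_of_eig tP PP eig.
  by exists (polyF P / polyF tau), lam.
- apply/seteqP; split => mu /=.
    move=> [P eig]; exists (polyF P / polyF tau).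
    exact: (qp_of_eig tP (eig_Ppm tP ha hb eig) eig).1.
  by move=> [pi qp]; have [P [_ eig _ _]] := part1 tP qp; exists P.
- apply/seteqP; split => mu /=.
    move=> [pi qp]; exists (fdeg pi); first by exists pi, mu.
    exact: lamE qp.
  move=> [k [pi [lam [qp <-]]] <-].
  by exists pi; rewrite (lamE _ _ qp).
Qed.
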